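(* For all $n\ge 0$, the quadruple of statistics $(\operatorname{asc},\operatorname{des},\operatorname{MNA},\operatorname{MND})$ has the same distribution on $S_n(231,312)$ as on $S_n(213,231)$, i.e. $$\sum_{\pi\in S_n(231,312)} t_1^{\operatorname{asc}(\pi)}t_2^{\operatorname{des}(\pi)}t_3^{\operatorname{MNA}(\pi)}t_4^{\operatorname{MND}(\pi)}=\sum_{\sigma\in S_n(213,231)} t_1^{\operatorname{asc}(\sigma)}t_2^{\operatorname{des}(\sigma)}t_3^{\operatorname{MNA}(\sigma)}t_4^{\operatorname{MND}(\sigma)}.$$
   Context: For $n\ge 0$, $S_n$ denotes the set of permutations $\pi=\pi_1\cdots\pi_n$ of $[n]=\{1,\dots,n\}$. $\pi$ avoids a pattern $\tau\in S_k$ if no subsequence $\pi_{i_1}\cdots\pi_{i_k}$ ($i_1<\dots<i_k$) satisfies $\pi_{i_a}<\pi_{i_b}\iff\tau_a<\tau_b$; $S_n(\tau,\rho)$ is the set of permutations in $S_n$ avoiding both $\tau$ and $\rho$. $\operatorname{asc}(\pi)$ (resp. $\operatorname{des}(\pi)$) is the number of $i\in[n-1]$ with $\pi_i<\pi_{i+1}$ (resp. $\pi_i>\pi_{i+1}$). $\operatorname{MNA}(\pi)$ is the maximum size of a set $I\subseteq[n-1]$ such that $\pi_i<\pi_{i+1}$ for all $i\in I$ and $|i-j|\ge 2$ for distinct $i,j\in I$; $\operatorname{MND}(\pi)$ is defined analogously with $\pi_i>\pi_{i+1}$. *)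

(* Defs.v *)
From mathcomp Require Import all_boot all_order all_algebra.
From mathcomp Require Import fingroup perm.
Set Implicit Arguments. Unset Strict Implicit. Unset Printing Implicit Defensive.
Import GRing.Theory.

(* Permutations of [n] are represented as {perm 'I_n}, with positions and
   values shifted by one (0-based). pi i is the value at position i. *)

(* one-line notation as a function on nat positions: pv pi j = pi_(j+1) - 1
   for j < n (and 0 otherwise, never used) *)
Definition pv (n : nat) (pi : {perm 'I_n}) (j : nat) : nat :=
  if insub j is Some i then (pi i : nat) else 0.

(* pi (in S_n) contains the pattern tau, given in one-line notation as a
   sequence of k distinct values (e.g. [:: 2; 3; 1] for 231): there are
   positions i_1 < ... < i_k (a strictly increasing map f : 'I_k -> 'I_n)
   such that pi_{i_a} < pi_{i_b} <-> tau_a < tau_b. *)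
Definition contains (n : nat) (pi : {perm 'I_n}) (tau : seq nat) : bool :=
  [exists f : {ffun 'I_(size tau) -> 'I_n},
    [forall a : 'I_(size tau), forall b : 'I_(size tau),
       ((a < b) ==> (f a < f b)) &&
       ((pi (f a) < pi (f b)) == (nth 0 tau a < nth 0 tau b))]].

Definition avoids (n : nat) (pi : {perm 'I_n}) (tau : seq nat) : bool :=
  ~~ contains pi tau.

Definition is_asc (n : nat) (pi : {perm 'I_n}) (i : 'I_n) : bool :=
  (i.+1 < n) && (pv pi i < pv pi i.+1).
Definition is_des (n : nat) (pi : {perm 'I_n}) (i : 'I_n) : bool :=
  (i.+1 < n) && (pv pi i.+1 < pv pi i).

Definition asc (n : nat) (pi : {perm 'I_n}) : nat := #|[pred i | is_asc pi i]|.
Definition des (n : nat) (pi : {perm 'I_n}) : nat := #|[pred i | is_des pi i]|.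

Definition nonadjacent (n : nat) (I : {set 'I_n}) : bool :=
  [forall i in I, forall j in I, (i != j) ==> ((i.+1 < j) || (j.+1 < i))].

Definition MNA (n : nat) (pi : {perm 'I_n}) : nat :=
  \max_(I : {set 'I_n} | [forall i in I, is_asc pi i] && nonadjacent I) #|I|.
Definition MND (n : nat) (pi : {perm 'I_n}) : nat :=
  \max_(I : {set 'I_n} | [forall i in I, is_des pi i] && nonadjacent I) #|I|.

Definition wt (R : comNzRingType) (t1 t2 t3 t4 : R) (n : nat) (pi : {perm 'I_n}) : R :=
  (t1 ^+ asc pi * t2 ^+ des pi * t3 ^+ MNA pi * t4 ^+ MND pi)%R.

(* Main.v *)
Require Import Defs.
From mathcomp Require Import all_boot all_order all_algebra.
From mathcomp Require Import fingroup perm.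
From mathcomp Require Import zify.
Set Implicit Arguments. Unset Strict Implicit. Unset Printing Implicit Defensive.

Definition rk n (lt : rel 'I_n) (a : 'I_n) := #|[pred c | lt c a]|.

Lemma rk_lt n (lt : rel 'I_n) (irr : irreflexive lt) a : rk lt a < n.
Proof.
have := cardC [pred c | lt c a]; rewrite card_ord => E.
rewrite /rk -[X in _ < X]E -addn1 leq_add2l; apply/card_gt0P; exists a; by rewrite !inE /= irr.
Qed.

Lemma rk_mono n (lt : rel 'I_n) (irr : irreflexive lt) (tr : transitive lt) a b :
  lt a b -> rk lt a < rk lt b.
Proof.
move=> hab; apply: proper_card; apply/properP; split.
  by apply/subsetP => c; rewrite !inE /= => hca; exact: (tr _ _ _ hca hab).
by exists a; rewrite !inE /= ?hab ?irr.
Qed.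

Definition mkf n (lt : rel 'I_n) (irr : irreflexive lt) (a : 'I_n) : 'I_n :=
  Ordinal (rk_lt irr a).

Lemma mkf_lt n (lt : rel 'I_n) (irr : irreflexive lt) (tr : transitive lt)
  (tot : forall a b, a != b -> lt a b || lt b a) a b :
  (mkf irr a < mkf irr b) = lt a b.
Proof.
rewrite /=; apply/idP/idP; last exact: rk_mono.
move=> h; case: (eqVneq a b) => [eab|nab]; first by rewrite eab ltnn in h.
case/orP: (tot a b nab) => // hba.
have := rk_mono irr tr hba; lia.
Qed.

Lemma mkf_inj n (lt : rel 'I_n) (irr : irreflexive lt) (tr : transitive lt)
  (tot : forall a b, a != b -> lt a b || lt b a) : injective (mkf irr).
Proof.
move=> a b /(congr1 val) /= e; case: (eqVneq a b) => // nab.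
case/orP: (tot a b nab) => h; have := rk_mono irr tr h; lia.
Qed.

Definition mkp n (lt : rel 'I_n) (irr : irreflexive lt) (tr : transitive lt)
  (tot : forall a b, a != b -> lt a b || lt b a) : {perm 'I_n} :=
  perm (@mkf_inj n lt irr tr tot).

Lemma mkp_lt n (lt : rel 'I_n) (irr : irreflexive lt) (tr : transitive lt)
  (tot : forall a b, a != b -> lt a b || lt b a) a b :
  (mkp irr tr tot a < mkp irr tr tot b) = lt a b.
Proof. by rewrite !permE mkf_lt. Qed.

Lemma card_lt_ord n m : m <= n -> #|[set v : 'I_n | v < m]| = m.
Proof.
move=> hm.
have inj : injective (@widen_ord m n hm).
  by move=> x y /(congr1 val) /= /val_inj.
transitivity #|(@widen_ord m n hm) @: [set: 'I_m]|; last by rewrite card_imset // cardsT card_ord.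
apply: eq_card => v; rewrite !inE; apply/idP/imsetP.
  by move=> hv; exists (Ordinal hv) => //; apply/val_inj.
by case=> x _ ->; rewrite /= ltn_ord.
Qed.

Lemma perm_rank n (p : {perm 'I_n}) a : (p a : nat) = #|[pred c | p c < p a]|.
Proof.
rewrite -{1}(card_lt_ord (ltnW (ltn_ord (p a)))) -(card_preimset _ (@perm_inj _ p)).
by apply: eq_card => c; rewrite !inE.
Qed.

Lemma mkp_uniq n (lt : rel 'I_n) (irr : irreflexive lt) (tr : transitive lt)
  (tot : forall a b, a != b -> lt a b || lt b a) (p : {perm 'I_n}) :
  (forall a b, (p a < p b) = lt a b) -> p = mkp irr tr tot.
Proof.
move=> H; apply/permP => a; apply/val_inj; rewrite permE /= perm_rank /rk.
by apply: eq_card => c; rewrite !inE /= H.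
Qed.
Lemma pv_ord n (p : {perm 'I_n}) (i : 'I_n) : pv p i = p i.
Proof. by rewrite /pv valK. Qed.

Lemma pvne n (p : {perm 'I_n}) (a b : 'I_n) : a != b -> (p a : nat) != p b.
Proof. by move=> h; rewrite val_eqE (inj_eq (@perm_inj _ p)). Qed.

Lemma pneq n (p : {perm 'I_n}) (a b : 'I_n) : a != b -> (p a < p b) = ~~ (p b < p a).
Proof. move=> /(pvne p) h; lia. Qed.

Definition desset n (p : {perm 'I_n}) := [set i | is_des p i].

Lemma desset_mem n (p : {perm 'I_n}) (j j1 : 'I_n) : val j1 = j.+1 ->
  (j \in desset p) = (p j1 < p j).
Proof. by move=> h; rewrite inE /is_des -h !pv_ord ltn_ord. Qed.

Lemma is_asc_eq n (p : {perm 'I_n}) (i : 'I_n) :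
  is_asc p i = (i.+1 < n) && (i \notin desset p).
Proof.
case h: (i.+1 < n); last by rewrite /is_asc h.
rewrite /is_asc h /= (@desset_mem _ _ _ (Ordinal h)) //.
rewrite -[i.+1]/(val (Ordinal h)) !pv_ord pneq //.
by rewrite -val_eqE /=; lia.
Qed.

Lemma is_des_eq n (p : {perm 'I_n}) (i : 'I_n) : is_des p i = (i \in desset p).
Proof. by rewrite inE. Qed.

Definition W (R : comNzRingType) (t1 t2 t3 t4 : R) n (D : {set 'I_n}) : R :=
  (t1 ^+ #|[pred i : 'I_n | ((i.+1 < n)%N) && (i \notin D)]| * t2 ^+ #|[pred i : 'I_n | i \in D]|
   * t3 ^+ (\max_(I : {set 'I_n} | [forall i in I, ((i.+1 < n)%N) && (i \notin D)] && nonadjacent I) #|I|)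
   * t4 ^+ (\max_(I : {set 'I_n} | [forall i in I, i \in D] && nonadjacent I) #|I|))%R.

Lemma wt_W (R : comNzRingType) (t1 t2 t3 t4 : R) n (p : {perm 'I_n}) :
  wt t1 t2 t3 t4 p = W t1 t2 t3 t4 (desset p).
Proof.
rewrite /wt /W.
have -> : asc p = #|[pred i : 'I_n | ((i.+1 < n)%N) && (i \notin desset p)]|.
  by apply: eq_card => i; rewrite !inE /= is_asc_eq inE.
have -> : des p = #|[pred i : 'I_n | i \in desset p]|.
  by apply: eq_card => i; rewrite !inE /= is_des_eq.
have -> : MNA p = \max_(I : {set 'I_n} | [forall i in I, ((i.+1 < n)%N) && (i \notin desset p)] && nonadjacent I) #|I|.
  by apply: eq_bigl => I; congr (_ && _); apply: eq_forallb => i; rewrite is_asc_eq.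
have -> : MND p = \max_(I : {set 'I_n} | [forall i in I, i \in desset p] && nonadjacent I) #|I|.
  by apply: eq_bigl => I; congr (_ && _); apply: eq_forallb => i; rewrite is_des_eq.
by [].
Qed.

Lemma contains_of n (p : {perm 'I_n}) (i j k : 'I_n) (x y z : nat) :
  i < j -> j < k -> x != y -> x != z -> y != z ->
  (p i < p j) = (x < y) -> (p i < p k) = (x < z) -> (p j < p k) = (y < z) ->
  contains p [:: x; y; z].
Proof.
move=> hij hjk nxy nxz nyz e1 e2 e3.
have hik : i < k by lia.
have r1 : (p j < p i) = (y < x).
  by rewrite pneq ?e1; [lia | rewrite -val_eqE /=; lia].
have r2 : (p k < p i) = (z < x).
  by rewrite pneq ?e2; [lia | rewrite -val_eqE /=; lia].
have r3 : (p k < p j) = (z < y).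
  by rewrite pneq ?e3; [lia | rewrite -val_eqE /=; lia].
apply/existsP; exists [ffun a : 'I_(size [:: x; y; z]) => nth i [:: i; j; k] a].
apply/forallP => a; apply/forallP => b; rewrite !ffunE.
case: a => [[|[|[|a]]] ha] //; case: b => [[|[|[|b]]] hb] //=;
  by rewrite ?ltnn ?hij ?hjk ?hik ?e1 ?e2 ?e3 ?r1 ?r2 ?r3 ?eqxx.
Qed.

Lemma contains_inv n (p : {perm 'I_n}) (x y z : nat) :
  contains p [:: x; y; z] ->
  exists i j k : 'I_n, [/\ i < j, j < k, (p i < p j) = (x < y),
                           (p i < p k) = (x < z) & (p j < p k) = (y < z)].
Proof.
case/existsP => f /forallP H.
have g : forall a b : 'I_3, a < b -> (f a < f b) &&
   ((p (f a) < p (f b)) == (nth 0 [:: x; y; z] a < nth 0 [:: x; y; z] b)).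
  move=> a b ab; have /forallP/(_ b)/andP[/implyP h1 h2] := H a; by rewrite h1.
have [/andP[h01 /eqP e01]] := (g (@Ordinal 3 0 isT) (@Ordinal 3 1 isT) isT).
have [/andP[h02 /eqP e02]] := (g (@Ordinal 3 0 isT) (@Ordinal 3 2 isT) isT).
have [/andP[h12 /eqP e12]] := (g (@Ordinal 3 1 isT) (@Ordinal 3 2 isT) isT).
by exists (f (@Ordinal 3 0 isT)), (f (@Ordinal 3 1 isT)), (f (@Ordinal 3 2 isT)).
Qed.

Lemma pat213 n (p : {perm 'I_n}) (i j k : 'I_n) :
  i < j -> j < k -> p j < p i -> p i < p k -> contains p [:: 2; 1; 3].
Proof. move=> hij hjk h1 h2; apply: (contains_of hij hjk) => //=; lia. Qed.
Lemma pat231 n (p : {perm 'I_n}) (i j k : 'I_n) :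
  i < j -> j < k -> p k < p i -> p i < p j -> contains p [:: 2; 3; 1].
Proof. move=> hij hjk h1 h2; apply: (contains_of hij hjk) => //=; lia. Qed.
Lemma pat312 n (p : {perm 'I_n}) (i j k : 'I_n) :
  i < j -> j < k -> p j < p k -> p k < p i -> contains p [:: 3; 1; 2].
Proof. move=> hij hjk h1 h2; apply: (contains_of hij hjk) => //=; lia. Qed.

Definition lt2 n (D : {set 'I_n}) : rel 'I_n :=
  fun a b => if a < b then a \notin D else if b < a then b \in D else false.

Lemma irr2 n (D : {set 'I_n}) : irreflexive (lt2 D).
Proof. by move=> a; rewrite /lt2 ltnn. Qed.

Lemma tr2 n (D : {set 'I_n}) : transitive (lt2 D).
Proof.
move=> b a c; rewrite /lt2.
case: (ltngtP a b) => hab; case: (ltngtP b c) => hbc; case: (ltngtP a c) => hac //;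
  try (exfalso; lia); move=> h1 h2.
all: try by [].
all: have e : forall u v : 'I_n, val u = val v -> u = v by move=> u v /val_inj.
all: try (by move: h1 h2; case: (_ \in D)).
all: try (have E := e _ _ hac; by move: h1 h2; rewrite ?E; case: (_ \in D)).
all: try (have E := e _ _ hab; by move: h1 h2; rewrite ?E; case: (_ \in D)).
all: try (have E := e _ _ hbc; by move: h1 h2; rewrite ?E; case: (_ \in D)).
Qed.

Lemma tot2 n (D : {set 'I_n}) a b : a != b -> lt2 D a b || lt2 D b a.
Proof.
rewrite /lt2 => ne.
case: (ltngtP a b) => h; first by case: (a \in D).
  by case: (b \in D).
by rewrite (val_inj h) eqxx in ne.
Qed.

Definition mk2 n (D : {set 'I_n}) := mkp (@irr2 n D) (@tr2 n D) (@tot2 n D).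

Lemma c2_cmp n (p : {perm 'I_n}) : ~~ contains p [:: 2; 1; 3] -> ~~ contains p [:: 2; 3; 1] ->
  forall j i : 'I_n, j < i -> (p j < p i) = (j \notin desset p).
Proof.
move=> A1 A2 j i ji.
have hj1 : j.+1 < n by have := ltn_ord i; lia.
rewrite (@desset_mem _ _ _ (Ordinal hj1)) //.
case: (eqVneq (j.+1) (i : nat)) => e.
  have -> : i = Ordinal hj1 by apply/val_inj.
  by rewrite pneq // -val_eqE /=; lia.
have j1i : Ordinal hj1 < i by rewrite /=; lia.
have jj1 : j < Ordinal hj1 by rewrite /=.
have d1 := pvne p (_ : j != Ordinal hj1).
have d2 := pvne p (_ : j != i).
have d3 := pvne p (_ : Ordinal hj1 != i).
have n1 : j != Ordinal hj1 by rewrite -val_eqE /=; lia.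
have n2 : j != i by rewrite -val_eqE /=; lia.
have n3 : Ordinal hj1 != i by rewrite -val_eqE /=; lia.
move: (d1 n1) (d2 n2) (d3 n3) => {d1 d2 d3} d1 d2 d3.
apply/idP/idP => h.
  apply/negP => h'; case/negP: A1; apply: (pat213 jj1 j1i) => //.
case: (ltnP (p j) (p i)) => // h2; case/negP: A2.
apply: (pat231 jj1 j1i); lia.
Qed.

Lemma c2_lt n (p : {perm 'I_n}) : ~~ contains p [:: 2; 1; 3] -> ~~ contains p [:: 2; 3; 1] ->
  forall a b, (p a < p b) = lt2 (desset p) a b.
Proof.
move=> A1 A2 a b; rewrite /lt2.
case: (ltngtP a b) => h; first exact: c2_cmp.
  by rewrite pneq ?(c2_cmp A1 A2 h) ?negbK // -val_eqE /=; lia.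
have -> : a = b by apply/val_inj.
by rewrite ltnn.
Qed.

Definition valid n (D : {set 'I_n}) := [forall i in D, i.+1 < n].

Lemma mk2_avoid n (D : {set 'I_n}) :
  ~~ contains (mk2 D) [:: 2; 1; 3] && ~~ contains (mk2 D) [:: 2; 3; 1].
Proof.
apply/andP; split; apply/negP => /contains_inv [i [j [k [hij hjk e1 e2 e3]]]];
  rewrite /mk2 !mkp_lt /lt2 /= in e1 e2 e3;
  have hik : i < k by lia.
  by rewrite hij in e1; rewrite hik in e2; rewrite e1 in e2.
by rewrite hij in e1; rewrite hik in e2; rewrite e1 in e2.
Qed.

Lemma mk2_des n (D : {set 'I_n}) : valid D -> desset (mk2 D) = D.
Proof.
move=> V; apply/setP => i; rewrite inE /is_des.
case h: (i.+1 < n) => /=.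
  rewrite -[i.+1]/(val (Ordinal h)) !pv_ord /mk2 mkp_lt /lt2 /=.
  by rewrite (_ : (i.+1 < i) = false) ?ltnSn //; lia.
by move/forallP: V => /(_ i); rewrite h; case: (i \in D).
Qed.

Definition cnt n (D : {set 'I_n}) (a : 'I_n) := #|[pred c : 'I_n | (c < a) && (c \notin D)]|.

Lemma cnt_step n (D : {set 'I_n}) (j j1 : 'I_n) : (j1 : nat) = j.+1 ->
  cnt D j1 = cnt D j + (j \notin D).
Proof.
move=> h; rewrite /cnt (cardD1 j) !inE /=.
have -> : (j < j1) = true by rewrite h ltnSn.
rewrite /= addnC; congr (_ + _).
apply: eq_card => c; rewrite !inE /= -val_eqE /=.
move: h; case: (c \notin D); rewrite ?andbF ?andbT //; lia.
Qed.

Lemma cnt_mono n (D : {set 'I_n}) (a b : 'I_n) : a <= b -> cnt D a <= cnt D b.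
Proof.
move=> ab; apply: subset_leq_card; apply/subsetP => c; rewrite !inE /= => /andP[h1 ->].
by rewrite andbT; lia.
Qed.

Definition lt1 n (D : {set 'I_n}) : rel 'I_n :=
  fun a b => (cnt D a < cnt D b) || ((cnt D a == cnt D b) && (b < a)).

Lemma irr1 n (D : {set 'I_n}) : irreflexive (lt1 D).
Proof. by move=> a; rewrite /lt1 ltnn eqxx ltnn. Qed.

Lemma tr1 n (D : {set 'I_n}) : transitive (lt1 D).
Proof.
move=> b a c; rewrite /lt1 => /orP[h1|/andP[/eqP h1 h1']] /orP[h2|/andP[/eqP h2 h2']];
  apply/orP.
- by left; lia.
- by left; lia.
- by left; lia.
- by right; apply/andP; split; [apply/eqP; lia | lia].
Qed.

Lemma tot1 n (D : {set 'I_n}) a b : a != b -> lt1 D a b || lt1 D b a.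
Proof.
move=> ne; rewrite /lt1.
case: (ltngtP (cnt D a) (cnt D b)) => h //=.
case: (ltngtP a b) => h2 //.
by rewrite (val_inj h2) eqxx in ne.
Qed.

Definition mk1 n (D : {set 'I_n}) := mkp (@irr1 n D) (@tr1 n D) (@tot1 n D).

Lemma c1_rec n (p : {perm 'I_n}) : ~~ contains p [:: 2; 3; 1] -> ~~ contains p [:: 3; 1; 2] ->
  forall j m i : 'I_n, j < m -> m < i -> (p j < p i) = (p j < p m) || (p m < p i).
Proof.
move=> A1 A2 j m i jm mi.
have n1 : j != m by rewrite -val_eqE /=; lia.
have n2 : j != i by rewrite -val_eqE /=; lia.
have n3 : m != i by rewrite -val_eqE /=; lia.
move: (pvne p n1) (pvne p n2) (pvne p n3) => d1 d2 d3.
apply/idP/orP.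
  by move=> h; case: (ltnP (p j) (p m)) => h1; [left | right; lia].
case=> h; case: (ltnP (p j) (p i)) => // h2.
  by case/negP: A1; apply: (pat231 jm mi); lia.
by case/negP: A2; apply: (pat312 jm mi); lia.
Qed.

Lemma c1_cmp n (p : {perm 'I_n}) : ~~ contains p [:: 2; 3; 1] -> ~~ contains p [:: 3; 1; 2] ->
  forall k (j i : 'I_n), (i : nat) = j + k.+1 ->
  (p j < p i) = (cnt (desset p) j < cnt (desset p) i).
Proof.
move=> A1 A2; elim=> [|k IH] j i e.
  have e' : val i = j.+1 by rewrite /=; lia.
  rewrite (cnt_step _ e') pneq; last by rewrite -val_eqE /=; lia.
  rewrite -(desset_mem p e').
  by case: (j \in desset p) => /=; rewrite ?addn0 ?addn1 ?ltnn ?ltnSn.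
have hj1 : j.+1 < n by have := ltn_ord i; lia.
have e1 : val (Ordinal hj1) = j.+1 by [].
rewrite (c1_rec A1 A2 (m := Ordinal hj1)) /=; [|lia|lia].
rewrite (IH (Ordinal hj1) i) /=; last lia.
rewrite pneq; last by rewrite -val_eqE /=; lia.
rewrite -(desset_mem p e1) (cnt_step _ e1).
have := cnt_mono (desset p) (_ : Ordinal hj1 <= i).
move=> /(_ _) mono; have {mono} mono := mono ltac:(rewrite /=; lia).
rewrite (cnt_step _ e1) in mono.
by case: (j \in desset p) mono => /=; rewrite ?addn0 ?addn1 => mono; lia.
Qed.

Lemma c1_lt n (p : {perm 'I_n}) : ~~ contains p [:: 2; 3; 1] -> ~~ contains p [:: 3; 1; 2] ->
  forall a b, (p a < p b) = lt1 (desset p) a b.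
Proof.
move=> A1 A2 a b; rewrite /lt1.
case: (ltngtP a b) => h.
- rewrite (c1_cmp A1 A2 (k := b - a.+1)); last lia.
  by rewrite andbF orbF.
- rewrite pneq; last by rewrite -val_eqE /=; lia.
  rewrite (c1_cmp A1 A2 (k := a - b.+1)); last lia.
  have := cnt_mono (desset p) (ltnW h); rewrite andbT; lia.
- have -> : a = b by apply/val_inj.
  by rewrite ltnn eqxx ltnn.
Qed.

Lemma mk1_avoid n (D : {set 'I_n}) :
  ~~ contains (mk1 D) [:: 2; 3; 1] && ~~ contains (mk1 D) [:: 3; 1; 2].
Proof.
apply/andP; split; apply/negP => /contains_inv [i [j [k [hij hjk e1 e2 e3]]]].
all: rewrite /mk1 !mkp_lt /lt1 /= in e1 e2 e3.
all: have m1 := cnt_mono D (ltnW hij); have m2 := cnt_mono D (ltnW hjk).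
all: have f1 : (j < i) = false by lia.
all: have f2 : (k < i) = false by lia.
all: have f3 : (k < j) = false by lia.
all: rewrite f1 f2 f3 !andbF !orbF in e1 e2 e3; lia.
Qed.

Lemma mk1_des n (D : {set 'I_n}) : valid D -> desset (mk1 D) = D.
Proof.
move=> V; apply/setP => i; rewrite inE /is_des.
case h: (i.+1 < n) => /=.
  rewrite -[i.+1]/(val (Ordinal h)) !pv_ord /mk1 mkp_lt /lt1 /=.
  rewrite (cnt_step D (_ : val (Ordinal h) = i.+1)) // ltnSn andbT.
  by case: (i \in D) => /=; rewrite ?addn0 ?addn1 ?ltnn ?eqxx ?ltnSn //; lia.
by move/forallP: V => /(_ i); rewrite h; case: (i \in D).
Qed.

Lemma desset_valid n (p : {perm 'I_n}) : valid (desset p).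
Proof. by apply/forallP => i; apply/implyP; rewrite inE /is_des => /andP[]. Qed.

Lemma sum_class (R : comNzRingType) (t1 t2 t3 t4 : R) n (C : pred {perm 'I_n})
  (mk : {set 'I_n} -> {perm 'I_n}) :
  (forall p, C p -> mk (desset p) = p) ->
  (forall D, C (mk D)) ->
  (forall D, valid D -> desset (mk D) = D) ->
  (\sum_(p | C p) wt t1 t2 t3 t4 p = \sum_(D : {set 'I_n} | valid D) W t1 t2 t3 t4 D)%R.
Proof.
move=> H1 H2 H3; rewrite (reindex_onto mk (@desset n) H1).
apply: eq_big => D.
  case V: (valid D); first by rewrite H2 H3 // eqxx.
  by apply/negbTE/negP => /andP [_ /eqP e]; rewrite -e desset_valid in V.
by move=> /andP [_ /eqP e]; rewrite wt_W e.
Qed.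

Local Open Scope ring_scope.

Theorem theorem16 (n : nat) (R : comNzRingType) (t1 t2 t3 t4 : R) :
  \sum_(pi : {perm 'I_n} | avoids pi [:: 2; 3; 1]%N && avoids pi [:: 3; 1; 2]%N)
     wt t1 t2 t3 t4 pi
  = \sum_(sigma : {perm 'I_n} | avoids sigma [:: 2; 1; 3]%N && avoids sigma [:: 2; 3; 1]%N)
     wt t1 t2 t3 t4 sigma.
Proof.
rewrite (@sum_class _ _ _ _ _ _ (fun p => avoids p [:: 2; 3; 1]%N && avoids p [:: 3; 1; 2]%N) (@mk1 n)).
- rewrite (@sum_class _ _ _ _ _ _ (fun p => avoids p [:: 2; 1; 3]%N && avoids p [:: 2; 3; 1]%N) (@mk2 n)) //.
  + move=> p /andP [A1 A2]; symmetry; apply: mkp_uniq; exact: c2_lt.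
  + exact: mk2_avoid.
  + exact: mk2_des.
- move=> p /andP [A1 A2]; symmetry; apply: mkp_uniq; exact: c1_lt.
- exact: mk1_avoid.
- exact: mk1_des.
Qed.
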